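(* Let $(M,\Delta,S)$ be a generalized counital $C^*$-bialgebra with target and source Cartan subalgebras $N_t$, $N_s$. Let $\theta_t$ be the trace of the left regular representation of $N_t$ (i.e. $\theta_t(n)=\mathrm{Tr}(m\mapsto nm)$ on $N_t$) and put $\varepsilon:=\theta_t\circ\varepsilon_t:M\to\mathbb{C}$. Then $(M,\Delta,S,\varepsilon)$ is a weak Kac algebra if and only if $(\mathrm{id}\otimes\varepsilon)\circ\Delta=\mathrm{id}$.
   Context: All algebras are finite-dimensional over $\mathbb{C}$; $\varsigma$ denotes the flip and $\mu(x\otimes y)=xy$. A generalized coinvolutive $C^*$-bialgebra is a triple $(M,\Delta,S)$ where $M$ is a finite-dimensional $C^*$-algebra; $\Delta:M\to M\otimes M$ is an injective, not necessarily unital, $*$-homomorphism with $(\Delta\otimes\mathrm{id})\Delta=(\mathrm{id}\otimes\Delta)\Delta$; and $S:M\to M$ is a linear, unital, antimultiplicative, $*$-preserving bijection with $S^2=\mathrm{id}$ and $(S\otimes S)\circ\Delta=\varsigma\circ\Delta\circ S$. Let $e=\Delta(1)$, $N_t=\{x:\Delta(x)=e(x\otimes1)=(x\otimes1)e\}$, $N_s=\{x:\Delta(x)=e(1\otimes x)=(1\otimes x)e\}$, $\varepsilon_t=\mu(\mathrm{id}\otimes S)\Delta$, $\varepsilon_s=\mu(S\otimes\mathrm{id})\Delta$. It is called counital if $\varepsilon_t(1)=1$, $\varepsilon_t(M)\subset N_t$, and $(\mathrm{id}\otimes\varepsilon_t)\Delta(x)=e(x\otimes1)$ for all $x\in N_s$.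 A weak Kac algebra is a quadruple $(M,\Delta,S,\varepsilon)$ with $(M,\Delta,S)$ a generalized coinvolutive $C^*$-bialgebra and $\varepsilon:M\to\mathbb{C}$ linear with $(\varepsilon\otimes\mathrm{id})\Delta=(\mathrm{id}\otimes\varepsilon)\Delta=\mathrm{id}$, $\varepsilon\circ S=\varepsilon$, $\varepsilon(x^* )=\overline{\varepsilon(x)}$, $(\varepsilon\otimes\varepsilon)((x\otimes1)e(1\otimes y))=\varepsilon(xy)$ for all $x,y$, and $(\varepsilon_s\otimes\mathrm{id})\Delta(x)=(1\otimes x)e$ for all $x$. *)

(* Defs.v *)
(* Tensor products M (x) M are represented in coordinates w.r.t. the canonical
   basis [vbasis {:M}] of M: an element  sum_{i,j} T i j  b_i (x) b_j  of M (x) M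
   is the square matrix T. *)
From HB Require Import structures.
From mathcomp Require Import all_boot all_order all_algebra all_field.
From mathcomp Require Import complex.
From mathcomp Require Import reals.

Set Implicit Arguments.
Unset Strict Implicit.
Unset Printing Implicit Defensive.

Import Order.TTheory GRing.Theory Num.Theory.
Local Open Scope ring_scope.

Section WeakKac.
Variable R : realType.
Variable M : falgType R[i].

Local Notation n := (\dim (fullv : {vspace M})).

Definition bM : n.-tuple M := vbasis fullv.
Definition bv (i : 'I_n) : M := tnth bM i.

Definition tens (x y : M) : 'M[R[i]]_n :=
  \matrix_(i, j) (coord bM i x * coord bM j y).

(* product on M (x) M : (x (x) y)(x' (x) y') = x x' (x) y y' *)
Definition tmul (T U : 'M[R[i]]_n) : 'M[R[i]]_n :=
  \sum_(i < n) \sum_(j < n) \sum_(k < n) \sum_(l < n)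
     (T i j * U k l) *: tens (bv i * bv k) (bv j * bv l).

Definition tmap (f g : M -> M) (T : 'M[R[i]]_n) : 'M[R[i]]_n :=
  \sum_(i < n) \sum_(j < n) T i j *: tens (f (bv i)) (g (bv j)).

(* involution on M (x) M : (x (x) y)^* = x^* (x) y^* *)
Definition tstar (s : M -> M) (T : 'M[R[i]]_n) : 'M[R[i]]_n :=
  \sum_(i < n) \sum_(j < n) conjc (T i j) *: tens (s (bv i)) (s (bv j)).

Definition tflip (T : 'M[R[i]]_n) : 'M[R[i]]_n := T^T.

Definition tmu (T : 'M[R[i]]_n) : M :=
  \sum_(i < n) \sum_(j < n) T i j *: (bv i * bv j).

Definition id_tens_fun (f : M -> R[i]) (T : 'M[R[i]]_n) : M :=
  \sum_(i < n) \sum_(j < n) (T i j * f (bv j)) *: bv i.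
Definition fun_tens_id (f : M -> R[i]) (T : 'M[R[i]]_n) : M :=
  \sum_(i < n) \sum_(j < n) (T i j * f (bv i)) *: bv j.

Definition fun_tens_fun (f g : M -> R[i]) (T : 'M[R[i]]_n) : R[i] :=
  \sum_(i < n) \sum_(j < n) T i j * f (bv i) * g (bv j).

(* coassociativity (Delta (x) id) Delta = (id (x) Delta) Delta,
   compared coefficientwise on b_i (x) b_j (x) b_k *)
Definition coassociative (D : M -> 'M[R[i]]_n) : Prop :=
  forall x i j k,
    \sum_(p < n) D x p k * D (bv p) i j = \sum_(q < n) D x i q * D (bv q) j k.

Definition is_linear_map (f : M -> M) : Prop :=
  forall (a : R[i]) x y, f (a *: x + y) = a *: f x + f y.
Definition is_linear_tmap (f : M -> 'M[R[i]]_n) : Prop :=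
  forall (a : R[i]) x y, f (a *: x + y) = a *: f x + f y.
Definition is_linear_functional (f : M -> R[i]) : Prop :=
  forall (a : R[i]) x y, f (a *: x + y) = a * f x + f y.

Definition star_algebra (s : M -> M) : Prop :=
  [/\ forall (a : R[i]) x y, s (a *: x + y) = conjc a *: s x + s y,
      forall x, s (s x) = x
    & forall x y, s (x * y) = s y * s x].

Definition cstar_norm (s : M -> M) (nrm : M -> R) : Prop :=
  (forall x, 0 <= nrm x) /\
  (forall x, nrm x = 0 -> x = 0) /\
  (forall x y, nrm (x + y) <= nrm x + nrm y) /\
  (forall (a : R[i]) x, nrm (a *: x) = ComplexField.Normc.normc a * nrm x) /\
  (forall x y, nrm (x * y) <= nrm x * nrm y) /\
  (forall x, nrm (s x * x) = nrm x ^+ 2).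

(* (M, s) is a (finite-dimensional, hence complete) C*-algebra *)
Definition cstar_algebra (s : M -> M) : Prop :=
  star_algebra s /\ exists nrm : M -> R, cstar_norm s nrm.

Definition gen_coinv_cstar_bialgebra (s : M -> M) (D : M -> 'M[R[i]]_n)
    (S : M -> M) : Prop :=
  [/\ cstar_algebra s,
      [/\ is_linear_tmap D, injective D,
          forall x y, D (x * y) = tmul (D x) (D y),
          forall x, D (s x) = tstar s (D x)
        & coassociative D],
      [/\ is_linear_map S, S 1 = 1,
          forall x y, S (x * y) = S y * S x,
          forall x, S (s x) = s (S x)
        & bijective S],
      forall x, S (S x) = x
    & forall x, tmap S S (D x) = tflip (D (S x))].

Definition unitD (D : M -> 'M[R[i]]_n) : 'M[R[i]]_n := D 1.

Definition in_Nt (D : M -> 'M[R[i]]_n) (x : M) : Prop :=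
  D x = tmul (unitD D) (tens x 1) /\ D x = tmul (tens x 1) (unitD D).
Definition in_Ns (D : M -> 'M[R[i]]_n) (x : M) : Prop :=
  D x = tmul (unitD D) (tens 1 x) /\ D x = tmul (tens 1 x) (unitD D).

Definition eps_t (D : M -> 'M[R[i]]_n) (S : M -> M) (x : M) : M :=
  tmu (tmap id S (D x)).
Definition eps_s (D : M -> 'M[R[i]]_n) (S : M -> M) (x : M) : M :=
  tmu (tmap S id (D x)).

Definition counital (D : M -> 'M[R[i]]_n) (S : M -> M) : Prop :=
  [/\ eps_t D S 1 = 1,
      forall x, in_Nt D (eps_t D S x)
    & forall x, in_Ns D x -> tmap id (eps_t D S) (D x) = tmul (unitD D) (tens x 1)].

(* N_t as a subspace of M (for Delta linear it is exactly {x | in_Nt D x}) *)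
Definition Nt_map (D : M -> 'M[R[i]]_n) (x : M) : 'M[R[i]]_n * 'M[R[i]]_n :=
  (D x - tmul (unitD D) (tens x 1), D x - tmul (tens x 1) (unitD D)).
Definition Nt_space (D : M -> 'M[R[i]]_n) : {vspace M} := lker (linfun (Nt_map D)).

(* theta_t(m) = trace of the left multiplication u |-> m u on N_t *)
Definition theta_t (D : M -> 'M[R[i]]_n) (m : M) : R[i] :=
  \sum_(i < \dim (Nt_space D))
     coord (vbasis (Nt_space D)) i (m * tnth (vbasis (Nt_space D)) i).

Definition weak_kac_algebra (s : M -> M) (D : M -> 'M[R[i]]_n) (S : M -> M)
    (eps : M -> R[i]) : Prop :=
  gen_coinv_cstar_bialgebra s D S /\
  is_linear_functional eps /\
  (forall x, fun_tens_id eps (D x) = x) /\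
  (forall x, id_tens_fun eps (D x) = x) /\
  (forall x, eps (S x) = eps x) /\
  (forall x, eps (s x) = conjc (eps x)) /\
  (forall x y, fun_tens_fun eps eps (tmul (tmul (tens x 1) (unitD D)) (tens 1 y))
               = eps (x * y)) /\
  (forall x, tmap (eps_s D S) id (D x) = tmul (tens 1 x) (unitD D)).

End WeakKac.

(* Main.v *)
Require Import Defs.
From HB Require Import structures.
From mathcomp Require Import all_boot all_order all_algebra all_field.
From mathcomp Require Import complex.
From mathcomp Require Import reals.
Set Implicit Arguments. Unset Strict Implicit. Unset Printing Implicit Defensive.
Import Order.TTheory GRing.Theory Num.Theory.
Local Open Scope ring_scope.
Section P.
Variable R : realType.
Variable M : falgType R[i].
Local Notation n := (\dim (fullv : {vspace M})).
Local Notation C := R[i].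
Local Notation T := ('M[C]_n).
Local Notation cd i x := (coord (bM M) i x).

Lemma bM_free : free (bM M). Proof. exact: basis_free (vbasisP fullv). Qed.
Lemma cd_bv (i j : 'I_n) : cd j (bv i) = (i == j)%:R.
Proof. by rewrite /bv (tnth_nth 0) coord_free // bM_free. Qed.
Lemma expand (x : M) : x = \sum_i cd i x *: bv i.
Proof. rewrite {1}(coord_vbasis (memvf x)). apply eq_bigr => i _. by rewrite /bv (tnth_nth 0). Qed.
Lemma cdD i (x y : M) : cd i (x + y) = cd i x + cd i y. Proof. exact: linearD. Qed.
Lemma cdZ i a (x : M) : cd i (a *: x) = a * cd i x. Proof. exact: linearZ. Qed.

Definition lin (U V : lmodType C) (f : U -> V) :=
  forall a x y, f (a *: x + y) = a *: f x + f y.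
Definition linS (U : lmodType C) (f : U -> C) :=
  forall a x y, f (a *: x + y) = a * f x + f y.

Section LinFacts.
Variables (U V : lmodType C) (f : U -> V) (hf : lin f).
Lemma lin0 : f 0 = 0.
Proof. have := hf 1 0 0. rewrite !scale1r addr0 => h. apply: (addrI (f 0)). by rewrite -h addr0. Qed.
Lemma linD x y : f (x + y) = f x + f y.
Proof. by rewrite -{1}(scale1r x) hf scale1r. Qed.
Lemma linZ a x : f (a *: x) = a *: f x.
Proof. by rewrite -(addr0 (a *: x)) hf lin0 addr0. Qed.
Lemma linN x : f (- x) = - f x.
Proof. by rewrite -scaleN1r linZ scaleN1r. Qed.
Lemma linB x y : f (x - y) = f x - f y.
Proof. by rewrite linD linN. Qed.
Lemma lin_sum (I : Type) (r : seq I) (P : pred I) (F : I -> U) :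
  f (\sum_(i <- r | P i) F i) = \sum_(i <- r | P i) f (F i).
Proof. exact: (big_morph f linD lin0). Qed.
End LinFacts.

Section LinSFacts.
Variables (U : lmodType C) (f : U -> C) (hf : linS f).
Lemma linS0 : f 0 = 0.
Proof. have := hf 1 0 0. rewrite scale1r addr0 mul1r => h. apply: (addrI (f 0)). by rewrite -h addr0. Qed.
Lemma linSD x y : f (x + y) = f x + f y.
Proof. by rewrite -{1}(scale1r x) hf mul1r. Qed.
Lemma linSZ a x : f (a *: x) = a * f x.
Proof. by rewrite -(addr0 (a *: x)) hf linS0 addr0. Qed.
Lemma linSN x : f (- x) = - f x.
Proof. by rewrite -scaleN1r linSZ mulN1r. Qed.
Lemma linSB x y : f (x - y) = f x - f y.
Proof. by rewrite linSD linSN. Qed.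
Lemma linS_sum (I : Type) (r : seq I) (P : pred I) (F : I -> U) :
  f (\sum_(i <- r | P i) F i) = \sum_(i <- r | P i) f (F i).
Proof. exact: (big_morph f linSD linS0). Qed.
End LinSFacts.

Lemma lin_comp (U V W : lmodType C) (f : U -> V) (g : V -> W) :
  lin f -> lin g -> lin (g \o f).
Proof. by move=> hf hg a x y /=; rewrite hf hg. Qed.
Lemma linS_comp (U V : lmodType C) (f : U -> V) (g : V -> C) :
  lin f -> linS g -> linS (g \o f).
Proof. by move=> hf hg a x y /=; rewrite hf hg. Qed.
Lemma lin_id (U : lmodType C) : lin (@id U). Proof. by []. Qed.

Lemma sum_delta (V : lmodType C) (F : 'I_n -> V) k :
  \sum_i (i == k)%:R *: F i = F k.
Proof.
rewrite (bigD1 k) //= eqxx scale1r big1 ?addr0 // => i /negbTE ->.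
by rewrite scale0r.
Qed.
Lemma sum_deltaS (F : 'I_n -> C) k : \sum_i F i * (i == k)%:R = F k.
Proof.
rewrite (bigD1 k) //= eqxx mulr1 big1 ?addr0 // => i /negbTE ->.
by rewrite mulr0.
Qed.

Lemma tensE x y i j : tens x y i j = cd i x * cd j y.
Proof. by rewrite mxE. Qed.
Lemma tens_linl y : lin (fun x : M => tens x y).
Proof. move=> a x z; apply/matrixP => i j; by rewrite !mxE cdD cdZ mulrDl mulrA. Qed.
Lemma tens_linr x : lin (fun y : M => tens x y).
Proof. move=> a y z; apply/matrixP => i j; by rewrite !mxE cdD cdZ mulrDr mulrCA. Qed.

Lemma collapse (V : lmodType C) (F : M -> M -> V) a b :
  (forall y, lin (F ^~ y)) -> (forall x, lin (F x)) ->
  \sum_i \sum_j (cd i a * cd j b) *: F (bv i) (bv j) = F a b.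
Proof.
move=> h1 h2.
rewrite [in RHS](expand a) (lin_sum (h1 b)).
apply: eq_bigr => i _; rewrite (linZ (h1 b)).
rewrite [in RHS](expand b) (lin_sum (h2 _)) scaler_sumr.
apply: eq_bigr => j _; by rewrite (linZ (h2 _)) scalerA.
Qed.
Lemma collapseS (F : M -> M -> C) a b :
  (forall y, linS (F ^~ y)) -> (forall x, linS (F x)) ->
  \sum_i \sum_j (cd i a * cd j b) * F (bv i) (bv j) = F a b.
Proof.
move=> h1 h2.
rewrite [in RHS](expand a) (linS_sum (h1 b)).
apply: eq_bigr => i _; rewrite (linSZ (h1 b)).
rewrite [in RHS](expand b) (linS_sum (h2 _)) mulr_sumr.
apply: eq_bigr => j _; by rewrite (linSZ (h2 _)) mulrA.
Qed.

Lemma mx_expand (A : T) : A = \sum_i \sum_j A i j *: tens (bv i) (bv j).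
Proof.
apply/matrixP => k l; rewrite summxE.
rewrite (bigD1 k) //= summxE (bigD1 l) //= !mxE !cd_bv !eqxx mulr1 mulr1.
rewrite big1 ?addr0; last first.
  by move=> j /negbTE hj; rewrite !mxE !cd_bv hj /= !mulr0.
rewrite big1 ?addr0 // => i /negbTE hi; rewrite summxE big1 // => j _.
by rewrite !mxE !cd_bv hi /= mul0r mulr0.
Qed.

Lemma lin_ext (V : lmodType C) (f g : T -> V) : lin f -> lin g ->
  (forall i j, f (tens (bv i) (bv j)) = g (tens (bv i) (bv j))) -> forall A, f A = g A.
Proof.
move=> hf hg h A; rewrite (mx_expand A) (lin_sum hf) (lin_sum hg).
apply: eq_bigr => i _; rewrite (lin_sum hf) (lin_sum hg).
by apply: eq_bigr => j _; rewrite (linZ hf) (linZ hg) h.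
Qed.
Lemma linS_ext (f g : T -> C) : linS f -> linS g ->
  (forall i j, f (tens (bv i) (bv j)) = g (tens (bv i) (bv j))) -> forall A, f A = g A.
Proof.
move=> hf hg h A; rewrite (mx_expand A) (linS_sum hf) (linS_sum hg).
apply: eq_bigr => i _; rewrite (linS_sum hf) (linS_sum hg).
by apply: eq_bigr => j _; rewrite (linSZ hf) (linSZ hg) h.
Qed.

Lemma form_lin (V : lmodType C) (F : 'I_n -> 'I_n -> V) :
  lin (fun A : T => \sum_i \sum_j A i j *: F i j).
Proof.
move=> a A B; rewrite scaler_sumr -big_split; apply: eq_bigr => i _.
rewrite scaler_sumr -big_split; apply: eq_bigr => j _.
by rewrite !mxE scalerDl scalerA.
Qed.
Lemma form_tens (V : lmodType C) (G : M -> M -> V) a b :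
  (forall y, lin (G ^~ y)) -> (forall x, lin (G x)) ->
  \sum_i \sum_j tens a b i j *: G (bv i) (bv j) = G a b.
Proof.
move=> h1 h2; rewrite -(@collapse _ G a b h1 h2); apply: eq_bigr => i _; apply: eq_bigr => j _.
by rewrite tensE.
Qed.
Lemma formS_lin (F : 'I_n -> 'I_n -> C) :
  linS (fun A : T => \sum_i \sum_j A i j * F i j).
Proof.
move=> a A B; rewrite mulr_sumr -big_split; apply: eq_bigr => i _.
rewrite mulr_sumr -big_split; apply: eq_bigr => j _.
by rewrite !mxE mulrDl mulrA.
Qed.

Lemma lin_sumf (U V : lmodType C) (I : finType) (F : I -> U -> V) :
  (forall k, lin (F k)) -> lin (fun x => \sum_k F k x).
Proof.
move=> h a x y; rewrite scaler_sumr -big_split; apply: eq_bigr => k _; exact: h.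
Qed.
Lemma lin_scalef (U V : lmodType C) c (f : U -> V) : lin f -> lin (fun x => c *: f x).
Proof. by move=> h a x y; rewrite h scalerDr !scalerA mulrC. Qed.
Lemma lin_mulr (m : M) : lin (fun x : M => x * m).
Proof. by move=> a x y; rewrite mulrDl scalerAl. Qed.
Lemma lin_mull (m : M) : lin (fun x : M => m * x).
Proof. by move=> a x y; rewrite mulrDr scalerAr. Qed.
Lemma lin_scalel (U : lmodType C) (u : U) (phi : U -> C) : linS phi -> lin (fun x => phi x *: u).
Proof. by move=> h a x y; rewrite h scalerDl scalerA. Qed.
Lemma lin_scaler (V : lmodType C) c : lin (fun x : V => c *: x).
Proof. by move=> a x y; rewrite scalerDr !scalerA mulrC. Qed.

Lemma form_tensS (G : M -> M -> C) a b :
  (forall y, linS (G ^~ y)) -> (forall x, linS (G x)) ->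
  \sum_i \sum_j tens a b i j * G (bv i) (bv j) = G a b.
Proof.
move=> h1 h2; rewrite -(@collapseS G a b h1 h2); apply: eq_bigr => i _; apply: eq_bigr => j _.
by rewrite tensE.
Qed.

Lemma tmul_linl (B : T) : lin (fun A : T => tmul A B).
Proof.
move=> a x y; rewrite /tmul.
rewrite scaler_sumr -big_split; apply: eq_bigr => i _.
rewrite scaler_sumr -big_split; apply: eq_bigr => j _.
rewrite scaler_sumr -big_split; apply: eq_bigr => k _.
rewrite scaler_sumr -big_split; apply: eq_bigr => l _.
by rewrite !mxE mulrDl scalerDl scalerA mulrA.
Qed.
Lemma tmul_linr (A : T) : lin (fun B : T => tmul A B).
Proof.
move=> a x y; rewrite /tmul.
rewrite scaler_sumr -big_split; apply: eq_bigr => i _.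
rewrite scaler_sumr -big_split; apply: eq_bigr => j _.
rewrite scaler_sumr -big_split; apply: eq_bigr => k _.
rewrite scaler_sumr -big_split; apply: eq_bigr => l _.
by rewrite !mxE mulrDr scalerDl scalerA mulrCA.
Qed.
Lemma tmul_tensl (a b : M) (B : T) :
  tmul (tens a b) B = \sum_k \sum_l B k l *: tens (a * bv k) (b * bv l).
Proof.
set G := fun x y => \sum_k \sum_l B k l *: tens (x * bv k) (y * bv l).
rewrite -/(G a b) -(@form_tens _ G a b).
- rewrite /tmul; apply: eq_bigr => i _; apply: eq_bigr => j _.
  rewrite /G scaler_sumr; apply: eq_bigr => k _; rewrite scaler_sumr; apply: eq_bigr => l _.
  by rewrite scalerA.
- move=> y; apply: lin_sumf => k; apply: lin_sumf => l; apply: lin_scalef.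
  exact: (lin_comp (lin_mulr _) (tens_linl _)).
- move=> x; apply: lin_sumf => k; apply: lin_sumf => l; apply: lin_scalef.
  exact: (lin_comp (lin_mulr _) (tens_linr _)).
Qed.
Lemma tmul_tens (a b c d : M) : tmul (tens a b) (tens c d) = tens (a * c) (b * d).
Proof.
rewrite tmul_tensl.
set G := fun x y => tens (a * x) (b * y).
rewrite -/(G c d) -(@form_tens _ G c d) //.
- move=> y; exact: (lin_comp (lin_mull _) (tens_linl _)).
- move=> x; exact: (lin_comp (lin_mull _) (tens_linr _)).
Qed.

Lemma tmap_lin (f g : M -> M) : lin (tmap f g).
Proof. exact: (form_lin (fun i j => tens (f (bv i)) (g (bv j)))). Qed.
Lemma tmap_tens (f g : M -> M) (a b : M) : lin f -> lin g -> tmap f g (tens a b) = tens (f a) (g b).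
Proof.
move=> hf hg; rewrite /tmap.
rewrite (@form_tens _ (fun x y => tens (f x) (g y))) //.
- move=> y; exact: (lin_comp hf (tens_linl _)).
- move=> x; exact: (lin_comp hg (tens_linr _)).
Qed.

Lemma tflip_lin : lin (@tflip R M).
Proof. by move=> a x y; rewrite /tflip linearD linearZ. Qed.
Lemma tflip_tens (a b : M) : tflip (tens a b) = tens b a.
Proof. by apply/matrixP => i j; rewrite /tflip !mxE mulrC. Qed.

Lemma tmu_lin : lin (@tmu R M).
Proof. exact: (form_lin (fun i j => bv i * bv j)). Qed.
Lemma tmu_tens (a b : M) : tmu (tens a b) = a * b.
Proof.
rewrite /tmu (@form_tens _ (fun x y => x * y)) //.
- move=> y; exact: lin_mulr.
- move=> x; exact: lin_mull.
Qed.

Lemma idfE (phi : M -> C) A : id_tens_fun phi A = \sum_i \sum_j A i j *: (phi (bv j) *: bv i).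
Proof. by apply: eq_bigr => i _; apply: eq_bigr => j _; rewrite scalerA. Qed.
Lemma idf_lin (phi : M -> C) : lin (@id_tens_fun R M phi).
Proof. move=> a x y; rewrite !idfE; exact: (form_lin (fun i j => phi (bv j) *: bv i)). Qed.
Lemma idf_tens (phi : M -> C) (a b : M) : linS phi -> id_tens_fun phi (tens a b) = phi b *: a.
Proof.
move=> hp; rewrite idfE (@form_tens _ (fun x y => phi y *: x)) //.
- move=> y; exact: lin_scaler.
- move=> x; exact: lin_scalel.
Qed.
Lemma fidE (phi : M -> C) A : fun_tens_id phi A = \sum_i \sum_j A i j *: (phi (bv i) *: bv j).
Proof. by apply: eq_bigr => i _; apply: eq_bigr => j _; rewrite scalerA. Qed.
Lemma fid_lin (phi : M -> C) : lin (@fun_tens_id R M phi).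
Proof. move=> a x y; rewrite !fidE; exact: (form_lin (fun i j => phi (bv i) *: bv j)). Qed.
Lemma fid_tens (phi : M -> C) (a b : M) : linS phi -> fun_tens_id phi (tens a b) = phi a *: b.
Proof.
move=> hp; rewrite fidE (@form_tens _ (fun x y => phi x *: y)) //.
- move=> y; exact: lin_scalel.
- move=> x; exact: lin_scaler.
Qed.
Lemma ftfE (phi psi : M -> C) A :
  fun_tens_fun phi psi A = \sum_i \sum_j A i j * (phi (bv i) * psi (bv j)).
Proof. by apply: eq_bigr => i _; apply: eq_bigr => j _; rewrite mulrA. Qed.
Lemma ftf_lin (phi psi : M -> C) : linS (@fun_tens_fun R M phi psi).
Proof. move=> a x y; rewrite !ftfE; exact: (formS_lin (fun i j => phi (bv i) * psi (bv j))). Qed.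
Lemma ftf_tens (phi psi : M -> C) (a b : M) : linS phi -> linS psi ->
  fun_tens_fun phi psi (tens a b) = phi a * psi b.
Proof.
move=> hp hq; rewrite ftfE (@form_tensS (fun x y => phi x * psi y)) //.
- move=> y c x z; by rewrite hp mulrDl mulrA.
- move=> x c y z; by rewrite hq mulrDr mulrCA.
Qed.

Lemma tmul_assoc (A B D : T) : tmul (tmul A B) D = tmul A (tmul B D).
Proof.
move: A; apply: (@lin_ext _ (fun A => tmul (tmul A B) D) (fun A => tmul A (tmul B D))).
- exact: (lin_comp (tmul_linl _) (tmul_linl _)).
- exact: tmul_linl.
move=> i j; move: B.
apply: (@lin_ext _ (fun B => tmul (tmul (tens (bv i) (bv j)) B) D) (fun B => tmul (tens (bv i) (bv j)) (tmul B D))).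
- exact: (lin_comp (tmul_linr _) (tmul_linl _)).
- exact: (lin_comp (tmul_linl _) (tmul_linr _)).
move=> k l; move: D.
apply: (@lin_ext _ (fun D => tmul (tmul (tens (bv i) (bv j)) (tens (bv k) (bv l))) D) (fun D => tmul (tens (bv i) (bv j)) (tmul (tens (bv k) (bv l)) D))).
- exact: tmul_linr.
- exact: (lin_comp (tmul_linr _) (tmul_linr _)).
by move=> p q; rewrite !tmul_tens !mulrA.
Qed.

Lemma tmul1 (A : T) : tmul A (tens 1 1) = A.
Proof.
move: A; apply: (@lin_ext _ (fun A => tmul A (tens 1 1)) id) => //.
- exact: tmul_linl.
by move=> i j; rewrite tmul_tens !mulr1.
Qed.
Lemma tmul1l (A : T) : tmul (tens 1 1) A = A.
Proof.
move: A; apply: (@lin_ext _ (fun A => tmul (tens 1 1) A) id) => //.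
- exact: tmul_linr.
by move=> i j; rewrite tmul_tens !mul1r.
Qed.

Lemma tflip_tmul (A B : T) : tflip (tmul A B) = tmul (tflip A) (tflip B).
Proof.
move: A; apply: (@lin_ext _ (fun A => tflip (tmul A B)) (fun A => tmul (tflip A) (tflip B))).
- exact: (lin_comp (tmul_linl _) tflip_lin).
- exact: (lin_comp tflip_lin (tmul_linl _)).
move=> i j; move: B.
apply: (@lin_ext _ (fun B => tflip (tmul (tens (bv i) (bv j)) B)) (fun B => tmul (tflip (tens (bv i) (bv j))) (tflip B))).
- exact: (lin_comp (tmul_linr _) tflip_lin).
- exact: (lin_comp tflip_lin (tmul_linr _)).
by move=> k l; rewrite !tflip_tens !tmul_tens tflip_tens.
Qed.
Lemma tflipK (A : T) : tflip (tflip A) = A.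
Proof. exact: trmxK. Qed.

Lemma tmap_anti (f : M -> M) : lin f -> (forall x y, f (x * y) = f y * f x) ->
  forall A B : T, tmap f f (tmul A B) = tmul (tmap f f B) (tmap f f A).
Proof.
move=> hf hm A B; move: A.
apply: (@lin_ext _ (fun A => tmap f f (tmul A B)) (fun A => tmul (tmap f f B) (tmap f f A))).
- exact: (lin_comp (tmul_linl _) (tmap_lin _ _)).
- exact: (lin_comp (tmap_lin _ _) (tmul_linr _)).
move=> i j; move: B.
apply: (@lin_ext _ (fun B => tmap f f (tmul (tens (bv i) (bv j)) B)) (fun B => tmul (tmap f f B) (tmap f f (tens (bv i) (bv j))))).
- exact: (lin_comp (tmul_linr _) (tmap_lin _ _)).
- exact: (lin_comp (tmap_lin _ _) (tmul_linl _)).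
by move=> k l; rewrite !tmap_tens // !tmul_tens tmap_tens // !hm.
Qed.

Lemma tmap_comp (f g f' g' : M -> M) : lin f -> lin g -> lin f' -> lin g' ->
  forall A : T, tmap f g (tmap f' g' A) = tmap (f \o f') (g \o g') A.
Proof.
move=> hf hg hf' hg'.
apply: (@lin_ext _ (fun A => tmap f g (tmap f' g' A)) (fun A => tmap (f \o f') (g \o g') A)).
- exact: (lin_comp (tmap_lin _ _) (tmap_lin _ _)).
- exact: tmap_lin.
move=> i j; rewrite !tmap_tens //; exact: lin_comp.
Qed.

Lemma tmap_flip (f g : M -> M) : lin f -> lin g ->
  forall A : T, tmap f g (tflip A) = tflip (tmap g f A).
Proof.
move=> hf hg.
apply: (@lin_ext _ (fun A => tmap f g (tflip A)) (fun A => tflip (tmap g f A))).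
- exact: (lin_comp tflip_lin (tmap_lin _ _)).
- exact: (lin_comp (tmap_lin _ _) tflip_lin).
by move=> i j; rewrite tflip_tens !tmap_tens // tflip_tens.
Qed.

Lemma tmap_ext (f g f' g' : M -> M) (A : T) : f =1 f' -> g =1 g' -> tmap f g A = tmap f' g' A.
Proof.
move=> h1 h2; rewrite /tmap; apply: eq_bigr => i _; apply: eq_bigr => j _.
by rewrite h1 h2.
Qed.

Lemma tmap_id (A : T) : tmap id id A = A.
Proof.
move: A; apply: (@lin_ext _ (fun A => tmap id id A) id) => //.
- exact: tmap_lin.
by move=> i j; rewrite tmap_tens.
Qed.

Lemma tmulDl (a : C) (X Y B : T) : tmul (a *: X + Y) B = a *: tmul X B + tmul Y B.
Proof. exact: (tmul_linl B). Qed.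
Lemma tmulDr (a : C) (X Y B : T) : tmul B (a *: X + Y) = a *: tmul B X + tmul B Y.
Proof. exact: (tmul_linr B). Qed.
Lemma tmapD (f g : M -> M) (a : C) (X Y : T) : tmap f g (a *: X + Y) = a *: tmap f g X + tmap f g Y.
Proof. exact: tmap_lin. Qed.
Lemma tmuD (a : C) (X Y : T) : tmu (a *: X + Y) = a *: tmu X + tmu Y.
Proof. exact: tmu_lin. Qed.
Lemma tflipD (a : C) (X Y : T) : tflip (a *: X + Y) = a *: tflip X + tflip Y.
Proof. exact: tflip_lin. Qed.
Lemma tensDl (a : C) (x y b : M) : tens (a *: x + y) b = a *: tens x b + tens y b.
Proof. exact: tens_linl. Qed.
Lemma tensDr (a : C) (x y b : M) : tens b (a *: x + y) = a *: tens b x + tens b y.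
Proof. exact: tens_linr. Qed.
Lemma idfD (phi : M -> C) (a : C) (X Y : T) :
  id_tens_fun phi (a *: X + Y) = a *: id_tens_fun phi X + id_tens_fun phi Y.
Proof. exact: idf_lin. Qed.
Lemma fidD (phi : M -> C) (a : C) (X Y : T) :
  fun_tens_id phi (a *: X + Y) = a *: fun_tens_id phi X + fun_tens_id phi Y.
Proof. exact: fid_lin. Qed.
Lemma ftfD (phi psi : M -> C) (a : C) (X Y : T) :
  fun_tens_fun phi psi (a *: X + Y) = a * fun_tens_fun phi psi X + fun_tens_fun phi psi Y.
Proof. exact: ftf_lin. Qed.
Lemma mulDZl (a : C) (x y m : M) : (a *: x + y) * m = a *: (x * m) + y * m.
Proof. by rewrite mulrDl scalerAl. Qed.
Lemma mulDZr (a : C) (x y m : M) : m * (a *: x + y) = a *: (m * x) + m * y.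
Proof. by rewrite mulrDr scalerAr. Qed.
End P.

Section Main.
Variable R : realType.
Variable M : falgType R[i].
Local Notation n := (\dim (fullv : {vspace M})).
Local Notation C := R[i].
Local Notation T := ('M[C]_n).
Local Notation cd i x := (coord (bM M) i x).
Variables (s : M -> M) (D : M -> T) (S : M -> M).
Hypothesis HG : gen_coinv_cstar_bialgebra s D S.
Hypothesis HC : counital D S.

Lemma Dlin : lin D.
Proof. by case: HG => _ [h _ _ _ _] _ _ _. Qed.
Lemma Dinj : injective D.
Proof. by case: HG => _ [_ h _ _ _] _ _ _. Qed.
Lemma Dmul x y : D (x * y) = tmul (D x) (D y).
Proof. by case: HG => _ [_ _ h _ _] _ _ _. Qed.
Lemma Dstar x : D (s x) = tstar s (D x).
Proof. by case: HG => _ [_ _ _ h _] _ _ _. Qed.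
Lemma Slin : lin S.
Proof. by case: HG => _ _ [h _ _ _ _] _ _. Qed.
Lemma S1 : S 1 = 1.
Proof. by case: HG => _ _ [_ h _ _ _] _ _. Qed.
Lemma Smul x y : S (x * y) = S y * S x.
Proof. by case: HG => _ _ [_ _ h _ _] _ _. Qed.
Lemma SS x : S (S x) = x.
Proof. by case: HG => _ _ _ h _. Qed.
Lemma DS x : D (S x) = tflip (tmap S S (D x)).
Proof. by case: HG => _ _ _ _ h; rewrite h tflipK. Qed.
Lemma santi a x y : s (a *: x + y) = conjc a *: s x + s y.
Proof. by case: HG => [[[h _ _] _]] _ _ _ _. Qed.
Lemma ss x : s (s x) = x.
Proof. by case: HG => [[[_ h _] _]] _ _ _ _. Qed.
Lemma et1 : eps_t D S 1 = 1.
Proof. by case: HC. Qed.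
Lemma etNt x : in_Nt D (eps_t D S x).
Proof. by case: HC. Qed.
Lemma C3 x : in_Ns D x -> tmap id (eps_t D S) (D x) = tmul (D 1) (tens x 1).
Proof. by case: HC => _ _ h; exact: h. Qed.

Local Notation e := (D 1).
Local Notation et := (eps_t D S).
Local Notation es := (eps_s D S).

Lemma D0 : D 0 = 0. Proof. exact: lin0 Dlin. Qed.
Lemma tmulDe x : tmul (D x) e = D x. Proof. by rewrite -Dmul mulr1. Qed.
Lemma tmuleD x : tmul e (D x) = D x. Proof. by rewrite -Dmul mul1r. Qed.
Lemma tmulee : tmul e e = e. Proof. exact: tmulDe. Qed.

Lemma et_lin : lin et.
Proof.
move=> a x y; rewrite /eps_t Dlin.
by rewrite (tmap_lin id S) (tmu_lin).
Qed.
Lemma es_lin : lin es.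
Proof.
move=> a x y; rewrite /eps_s Dlin.
by rewrite (tmap_lin S id) (tmu_lin).
Qed.

Definition eps x := theta_t D (eps_t D S x).
Lemma th_lin : linS (theta_t D).
Proof.
move=> a x y; rewrite /theta_t mulr_sumr -big_split; apply: eq_bigr => i _.
by rewrite mulrDl -scalerAl linearD linearZ.
Qed.
Lemma eps_lin : linS eps.
Proof. exact: (linS_comp et_lin th_lin). Qed.


Lemma SD a x y : S (a *: x + y) = a *: S x + S y. Proof. exact: Slin. Qed.
Lemma DD a x y : D (a *: x + y) = a *: D x + D y. Proof. exact: Dlin. Qed.
Lemma etD a x y : eps_t D S (a *: x + y) = a *: eps_t D S x + eps_t D S y.
Proof. by rewrite /eps_t DD tmapD tmuD. Qed.
Lemma esD a x y : eps_s D S (a *: x + y) = a *: eps_s D S x + eps_s D S y.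
Proof. by rewrite /eps_s DD tmapD tmuD. Qed.
Ltac lin_tac := let a := fresh "a" in let X := fresh "X" in let Y := fresh "Y" in
  move=> a X Y /=; rewrite ?(tmulDl, tmulDr, tmapD, tmuD, tflipD, tensDl, tensDr, idfD, fidD, ftfD, mulDZl, mulDZr, SD, DD, etD, esD).

Lemma Nt_l z : in_Nt D z -> D z = tmul e (tens z 1). Proof. by case. Qed.
Lemma Nt_r z : in_Nt D z -> D z = tmul (tens z 1) e. Proof. by case. Qed.
Lemma Ns_l y : in_Ns D y -> D y = tmul e (tens 1 y). Proof. by case. Qed.
Lemma Ns_r y : in_Ns D y -> D y = tmul (tens 1 y) e. Proof. by case. Qed.

Lemma DNt x z : in_Nt D z -> D (x * z) = tmul (D x) (tens z 1).
Proof. by move=> hz; rewrite Dmul (Nt_l hz) -tmul_assoc tmulDe. Qed.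
Lemma DNs x y : in_Ns D y -> D (x * y) = tmul (D x) (tens 1 y).
Proof. by move=> hy; rewrite Dmul (Ns_l hy) -tmul_assoc tmulDe. Qed.
Lemma DNsl y x : in_Ns D y -> D (y * x) = tmul (tens 1 y) (D x).
Proof. by move=> hy; rewrite Dmul (Ns_r hy) tmul_assoc tmuleD. Qed.

Lemma tmapSS_e : tmap S S e = tflip e.
Proof. by case: HG => _ _ _ _ h; rewrite h S1. Qed.

Lemma SNt z : in_Nt D z -> in_Ns D (S z).
Proof.
move=> hz; split.
- rewrite DS (Nt_r hz) (tmap_anti Slin Smul) tmapSS_e tmap_tens; [|exact: Slin|exact: Slin].
  by rewrite S1 tflip_tmul tflipK tflip_tens.
- rewrite DS (Nt_l hz) (tmap_anti Slin Smul) tmapSS_e tmap_tens; [|exact: Slin|exact: Slin].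
  by rewrite S1 tflip_tmul tflipK tflip_tens.
Qed.

Lemma Ns1 : in_Ns D 1.
Proof. by split; rewrite ?tmul1 ?tmul1l. Qed.

Lemma tmap_et_e : tmap id et e = e.
Proof. by rewrite (C3 Ns1) tmul1. Qed.

Lemma et_Ns y w : in_Ns D y -> et (y * w) = et w * S y.
Proof.
move=> hy; rewrite /eps_t (DNsl _ hy).
move: (D w); apply: (@lin_ext _ _ _ (fun A => tmu (tmap id S (tmul (tens 1 y) A))) (fun A => tmu (tmap id S A) * S y)).
- by lin_tac.
- by lin_tac.
move=> i j; rewrite tmul_tens !tmap_tens; [|exact: lin_id|exact: Slin|exact: lin_id|exact: Slin].
by rewrite !tmu_tens mul1r Smul mulrA.
Qed.

Lemma e_Ns y : in_Ns D y -> tmul e (tens y 1) = tmul e (tens 1 (S y)).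
Proof.
move=> hy; rewrite -(C3 hy) (Ns_r hy).
have -> : forall A, tmap id et (tmul (tens 1 y) A) = tmul (tmap id et A) (tens 1 (S y)).
  apply: (@lin_ext _ _ _ (fun A => tmap id et (tmul (tens 1 y) A)) (fun A => tmul (tmap id et A) (tens 1 (S y)))).
  - by lin_tac.
  - by lin_tac.
  move=> i j; rewrite tmul_tens !tmap_tens; [|exact: lin_id|exact: et_lin|exact: lin_id|exact: et_lin].
  by rewrite tmul_tens mul1r mulr1 et_Ns.
by rewrite tmap_et_e.
Qed.
Lemma e_Nt z : in_Nt D z -> tmul e (tens 1 z) = tmul e (tens (S z) 1).
Proof. by move=> hz; rewrite (e_Ns (SNt hz)) SS. Qed.

Lemma et_NtS x z : in_Nt D z -> et (x * z) = et (x * S z).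
Proof.
move=> hz; rewrite /eps_t (DNt _ hz) (DNs _ (SNt hz)).
move: (D x); apply: (@lin_ext _ _ _ (fun A => tmu (tmap id S (tmul A (tens z 1)))) (fun A => tmu (tmap id S (tmul A (tens 1 (S z)))))).
- by lin_tac.
- by lin_tac.
move=> i j; rewrite !tmul_tens !tmap_tens; [|exact: lin_id|exact: Slin|exact: lin_id|exact: Slin].
by rewrite !tmu_tens !mulr1 Smul SS mulrA.
Qed.

Lemma et_mul_et x y : et (x * y) = et (x * et y).
Proof.
have -> : et (x * et y) = tmu (tmap id S (tmul (D x) (tens (et y) 1))).
  by rewrite {1}/eps_t (DNt _ (etNt y)).
rewrite /eps_t Dmul.
move: (D x) (D y) => A B; move: A.
apply: (@lin_ext _ _ _ (fun A => tmu (tmap id S (tmul A B))) (fun A => tmu (tmap id S (tmul A (tens (tmu (tmap id S B)) 1))))).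
- by lin_tac.
- by lin_tac.
move=> i j; move: B.
apply: (@lin_ext _ _ _ (fun B => tmu (tmap id S (tmul (tens (bv i) (bv j)) B))) (fun B => tmu (tmap id S (tmul (tens (bv i) (bv j)) (tens (tmu (tmap id S B)) 1))))).
- by lin_tac.
- by lin_tac.
move=> k l; rewrite !tmul_tens !tmap_tens; [|exact: lin_id|exact: Slin|exact: lin_id|exact: Slin|exact: lin_id|exact: Slin].
by rewrite !tmu_tens mulr1 Smul !mulrA.
Qed.

Lemma eps_mul_et x y : eps (x * y) = eps (x * et y).
Proof. by rewrite /eps et_mul_et. Qed.
Lemma eps_NtS x z : in_Nt D z -> eps (x * z) = eps (x * S z).
Proof. by move=> hz; rewrite /eps et_NtS. Qed.

Lemma tmul_ee_comm (X Y : T) : tmul X e = tmul e X -> tmul Y e = tmul e Y ->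
  tmul (tmul e X) (tmul e Y) = tmul e (tmul X Y).
Proof.
move=> hX hY.
by rewrite tmul_assoc -(tmul_assoc X) hX !tmul_assoc -(tmul_assoc e e) tmulee.
Qed.
Lemma NtNs_comm z y : in_Nt D z -> in_Ns D y -> z * y = y * z.
Proof.
move=> hz hy; apply: Dinj; rewrite !Dmul.
rewrite (Nt_l hz) (Ns_l hy) !tmul_ee_comm ?tmul_tens ?mul1r ?mulr1 //;
 by rewrite -?(Nt_l hz) -?(Nt_r hz) -?(Ns_l hy) -?(Ns_r hy).
Qed.


Lemma epsD a x y : eps (a *: x + y) = a * eps x + eps y.
Proof. exact: eps_lin. Qed.
Lemma cdDZ k a (x y : M) : cd k (a *: x + y) = a * cd k x + cd k y.
Proof. by rewrite cdD cdZ. Qed.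
Ltac linS_tac := let a := fresh "a" in let X := fresh "X" in let Y := fresh "Y" in
  move=> a X Y /=; rewrite ?(tmulDl, tmulDr, tmapD, tmuD, tflipD, tensDl, tensDr, idfD, fidD, ftfD, mulDZl, mulDZr, SD, DD, etD, esD, epsD, cdDZ).

Lemma idf_flip (phi : M -> C) (A : T) : linS phi -> id_tens_fun phi (tflip A) = fun_tens_id phi A.
Proof.
move=> hp; move: A.
apply: (@lin_ext _ _ _ (fun A => id_tens_fun phi (tflip A)) (fun A => fun_tens_id phi A)).
- by lin_tac.
- by lin_tac.
by move=> i j; rewrite tflip_tens idf_tens // fid_tens.
Qed.

Lemma ftf_idf (phi psi : M -> C) (A : T) : linS phi -> linS psi ->
  phi (id_tens_fun psi A) = fun_tens_fun phi psi A.
Proof.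
move=> hp hq; move: A.
apply: (@linS_ext _ _ (fun A => phi (id_tens_fun psi A)) (fun A => fun_tens_fun phi psi A)).
- by move=> a X Y /=; rewrite idfD hp.
- by linS_tac.
by move=> i j; rewrite idf_tens // ftf_tens // (linSZ hp) mulrC.
Qed.
Lemma ftf_fid (phi psi : M -> C) (A : T) : linS phi -> linS psi ->
  psi (fun_tens_id phi A) = fun_tens_fun phi psi A.
Proof.
move=> hp hq; move: A.
apply: (@linS_ext _ _ (fun A => psi (fun_tens_id phi A)) (fun A => fun_tens_fun phi psi A)).
- by move=> a X Y /=; rewrite fidD hq.
- by linS_tac.
by move=> i j; rewrite fid_tens // ftf_tens // (linSZ hq).
Qed.
Lemma idf_ext (phi psi : M -> C) (A : T) : phi =1 psi -> id_tens_fun phi A = id_tens_fun psi A.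
Proof. by move=> h; apply: eq_bigr => i _; apply: eq_bigr => j _; rewrite h. Qed.
Lemma fid_ext (phi psi : M -> C) (A : T) : phi =1 psi -> fun_tens_id phi A = fun_tens_id psi A.
Proof. by move=> h; apply: eq_bigr => i _; apply: eq_bigr => j _; rewrite h. Qed.

Lemma fid_tmapSS (A : T) : fun_tens_id eps (tmap S S A) = S (fun_tens_id (fun m => eps (S m)) A).
Proof.
move: A.
apply: (@lin_ext _ _ _ (fun A => fun_tens_id eps (tmap S S A)) (fun A => S (fun_tens_id (fun m => eps (S m)) A))).
- by lin_tac.
- by lin_tac.
move=> i j; rewrite tmap_tens; [|exact: Slin|exact: Slin].
rewrite !fid_tens; [|exact: (linS_comp Slin eps_lin)|exact: eps_lin].
by rewrite (linZ Slin).
Qed.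

Hypothesis H : forall x, id_tens_fun eps (D x) = x.

Lemma fidS x : fun_tens_id (fun m => eps (S m)) (D x) = x.
Proof.
apply: (can_inj SS); rewrite -fid_tmapSS -idf_flip; last exact: eps_lin.
by rewrite -DS H.
Qed.

Lemma epsS x : eps (S x) = eps x.
Proof.
have h1 := ftf_idf (D x) (linS_comp Slin eps_lin) eps_lin.
have h2 := ftf_fid (D x) (linS_comp Slin eps_lin) eps_lin.
rewrite /= H in h1. by rewrite h1 -h2 fidS.
Qed.

Lemma fid_eps x : fun_tens_id eps (D x) = x.
Proof. rewrite -[RHS]fidS; apply: fid_ext => m; by rewrite epsS. Qed.


Lemma sD x y : s (x + y) = s x + s y.
Proof. by rewrite -{1}(scale1r x) santi conjc1 scale1r. Qed.
Lemma s0 : s 0 = 0.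
Proof. have := sD 0 0; rewrite addr0 => h; apply: (addrI (s 0)); by rewrite -h addr0. Qed.
Lemma sZ a x : s (a *: x) = conjc a *: s x.
Proof. by rewrite -(addr0 (a *: x)) santi s0 addr0. Qed.
Lemma s_sum (I : Type) (r : seq I) (P : pred I) (F : I -> M) :
  s (\sum_(i <- r | P i) F i) = \sum_(i <- r | P i) s (F i).
Proof. exact: (big_morph s sD s0). Qed.

Lemma conjcM' (a b : C) : conjc (a * b) = conjc a * conjc b.
Proof. exact: rmorphM. Qed.
Lemma conjcD' (a b : C) : conjc (a + b) = conjc a + conjc b.
Proof. exact: raddfD. Qed.

Definition eps2 m := conjc (eps (s m)).
Lemma eps2_lin : linS eps2.
Proof.
move=> a x y; rewrite /eps2 santi epsD conjcD' conjcM' conjcK.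
by [].
Qed.

Lemma idf_tstar (A : T) : id_tens_fun eps (tstar s A) = s (id_tens_fun eps2 A).
Proof.
rewrite /tstar (lin_sum (idf_lin eps)) idfE s_sum; apply: eq_bigr => i _.
rewrite (lin_sum (idf_lin eps)) s_sum; apply: eq_bigr => j _.
rewrite (linZ (idf_lin eps)) idf_tens; last exact: eps_lin.
by rewrite !sZ /eps2 conjcK.
Qed.

Lemma idf_eps2 x : id_tens_fun eps2 (D x) = x.
Proof. by apply: (can_inj ss); rewrite -idf_tstar -Dstar H. Qed.

Lemma eps_star x : eps (s x) = conjc (eps x).
Proof.
have h1 := ftf_idf (D x) eps_lin eps2_lin.
have h2 := ftf_fid (D x) eps_lin eps2_lin.
rewrite idf_eps2 in h1; rewrite fid_eps in h2.
have : eps2 x = eps x by rewrite h2 h1.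
by rewrite /eps2 => <-; rewrite conjcK.
Qed.

Lemma W5 x y : fun_tens_fun eps eps (tmul (tmul (tens x 1) (unitD D)) (tens 1 y)) = eps (x * y).
Proof.
have stepA : forall A, fun_tens_fun eps eps (tmul (tmul (tens x 1) A) (tens 1 y))
   = fun_tens_fun eps eps (tmul (tmul (tens x 1) A) (tens 1 (et y))).
  apply: (@linS_ext _ _ (fun A => fun_tens_fun eps eps (tmul (tmul (tens x 1) A) (tens 1 y)))
                        (fun A => fun_tens_fun eps eps (tmul (tmul (tens x 1) A) (tens 1 (et y))))).
  - by linS_tac.
  - by linS_tac.
  move=> i j; rewrite !tmul_tens !ftf_tens; [|exact: eps_lin|exact: eps_lin|exact: eps_lin|exact: eps_lin].
  by rewrite (eps_mul_et (1 * bv j) y).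
have stepC : forall A w, fun_tens_fun eps eps (tmul (tens x 1) (tmul A (tens w 1)))
   = eps (x * id_tens_fun eps A * w).
  move=> A w; move: A.
  apply: (@linS_ext _ _ (fun A => fun_tens_fun eps eps (tmul (tens x 1) (tmul A (tens w 1))))
                        (fun A => eps (x * id_tens_fun eps A * w))).
  - by linS_tac.
  - by linS_tac.
  move=> i j; rewrite !tmul_tens ftf_tens; [|exact: eps_lin|exact: eps_lin].
  rewrite idf_tens; last exact: eps_lin.
  by rewrite -scalerAr -scalerAl (linSZ eps_lin) mul1r mulr1 mulrA mulrC.
rewrite /unitD stepA tmul_assoc (e_Nt (etNt y)) stepC H mulr1.
by rewrite -(eps_NtS x (etNt y)) -eps_mul_et.
Qed.


Definition rowel (A : T) (k : 'I_n) : M := \sum_j A k j *: bv j.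
Lemma rowelD k a (X Y : T) : rowel (a *: X + Y) k = a *: rowel X k + rowel Y k.
Proof.
rewrite /rowel scaler_sumr -big_split; apply: eq_bigr => j _.
by rewrite !mxE scalerDl scalerA.
Qed.
Lemma rowel_tens (a b : M) k : rowel (tens a b) k = cd k a *: b.
Proof.
rewrite /rowel [in RHS](expand b) scaler_sumr; apply: eq_bigr => j _.
by rewrite tensE scalerA.
Qed.
Lemma entry_rowel (A : T) k l : A k l = cd l (rowel A k).
Proof.
rewrite /rowel (linear_sum (coord (bM M) l)).
rewrite -[LHS](sum_deltaS (fun j => A k j) l); apply: eq_bigr => j _.
by rewrite linearZ /= cd_bv.
Qed.
Lemma rowel_tmap (g : M -> M) (A : T) k : lin g -> rowel (tmap id g A) k = g (rowel A k).
Proof.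
move=> hg; move: A.
apply: (@lin_ext _ _ _ (fun A => rowel (tmap id g A) k) (fun A => g (rowel A k))).
- by move=> a X Y /=; rewrite tmapD rowelD.
- by move=> a X Y /=; rewrite rowelD hg.
move=> i j; rewrite tmap_tens; [|exact: lin_id|exact: hg].
by rewrite !rowel_tens (linZ hg).
Qed.
Lemma cd_idf (phi : M -> C) (A : T) k : linS phi -> cd k (id_tens_fun phi A) = phi (rowel A k).
Proof.
move=> hp; move: A.
apply: (@linS_ext _ _ (fun A => cd k (id_tens_fun phi A)) (fun A => phi (rowel A k))).
- by move=> a X Y /=; rewrite idfD cdDZ.
- by move=> a X Y /=; rewrite rowelD hp.
move=> i j; rewrite idf_tens // rowel_tens cdZ (linSZ hp).
by rewrite mulrC.
Qed.

Lemma eps_mulr_lin w : linS (fun m => eps (m * w)).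
Proof. by move=> a X Y; rewrite mulDZl epsD. Qed.
Lemma eps_mull_lin w : linS (fun m => eps (w * m)).
Proof. by move=> a X Y; rewrite mulDZr epsD. Qed.

Lemma fid_tmul_l (a : M) (A : T) :
  fun_tens_id eps (tmul (tens a 1) A) = fun_tens_id (fun m => eps (a * m)) A.
Proof.
move: A.
apply: (@lin_ext _ _ _ (fun A => fun_tens_id eps (tmul (tens a 1) A)) (fun A => fun_tens_id (fun m => eps (a * m)) A)).
- by lin_tac.
- by lin_tac.
move=> i j; rewrite tmul_tens fid_tens; last exact: eps_lin.
rewrite fid_tens; last exact: eps_mull_lin.
by rewrite mul1r.
Qed.


Lemma ND (P Q : T) :
  (forall w, id_tens_fun (fun m => eps (m * w)) (tmap id et P)
           = id_tens_fun (fun m => eps (m * w)) (tmap id et Q)) ->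
  tmap id et P = tmap id et Q.
Proof.
move=> h; apply/matrixP => k l; rewrite !entry_rowel; congr (cd l _).
rewrite !rowel_tmap; [|exact: et_lin|exact: et_lin].
apply/eqP; rewrite -subr_eq0 -(linB et_lin); apply/eqP.
set a := et _.
have ha : forall w, eps (a * w) = 0.
  move=> w; have := congr1 (fun v => cd k v) (h w) => /=.
  rewrite !cd_idf; [|exact: eps_mulr_lin|exact: eps_mulr_lin].
  rewrite !rowel_tmap; [|exact: et_lin|exact: et_lin].
  by rewrite /a (linB et_lin) mulrBl (linSB eps_lin) => ->; rewrite subrr.
rewrite -[a]fid_eps (Nt_r (etNt _)) fid_tmul_l.
rewrite (@fid_ext _ (fun=> 0)) // /fun_tens_id big1 // => i _; rewrite big1 // => j _.
by rewrite mulr0 scale0r.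
Qed.

Lemma tmap_et_tmul (A : T) x : tmap id et (tmul A (tens x 1)) = tmul (tmap id et A) (tens x 1).
Proof.
move: A.
apply: (@lin_ext _ _ _ (fun A => tmap id et (tmul A (tens x 1))) (fun A => tmul (tmap id et A) (tens x 1))).
- by lin_tac.
- by lin_tac.
move=> i j; rewrite tmul_tens !tmap_tens; [|exact: lin_id|exact: et_lin|exact: lin_id|exact: et_lin].
by rewrite tmul_tens !mulr1.
Qed.

Lemma idf_tmap (phi : M -> C) (g : M -> M) (A : T) : linS phi -> lin g ->
  id_tens_fun phi (tmap id g A) = id_tens_fun (fun m => phi (g m)) A.
Proof.
move=> hp hg; move: A.
apply: (@lin_ext _ _ _ (fun A => id_tens_fun phi (tmap id g A)) (fun A => id_tens_fun (fun m => phi (g m)) A)).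
- by lin_tac.
- by lin_tac.
move=> i j; rewrite tmap_tens; [|exact: lin_id|exact: hg].
rewrite !idf_tens //; exact: linS_comp.
Qed.

Lemma idf_tmul_1l (y : M) (A : T) :
  id_tens_fun eps (tmul (tens 1 y) A) = id_tens_fun (fun m => eps (y * m)) A.
Proof.
move: A.
apply: (@lin_ext _ _ _ (fun A => id_tens_fun eps (tmul (tens 1 y) A)) (fun A => id_tens_fun (fun m => eps (y * m)) A)).
- by lin_tac.
- by lin_tac.
move=> i j; rewrite tmul_tens idf_tens; last exact: eps_lin.
rewrite idf_tens; last exact: eps_mull_lin.
by rewrite mul1r.
Qed.

Lemma idf_tmul_r1 (phi : M -> C) (A : T) x : linS phi ->
  id_tens_fun phi (tmul A (tens x 1)) = id_tens_fun phi A * x.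
Proof.
move=> hp; move: A.
apply: (@lin_ext _ _ _ (fun A => id_tens_fun phi (tmul A (tens x 1))) (fun A => id_tens_fun phi A * x)).
- by lin_tac.
- by lin_tac.
move=> i j; rewrite tmul_tens !idf_tens // mulr1.
by rewrite scalerAl.
Qed.

Lemma idf_tmul_1r (A : T) z :
  id_tens_fun eps (tmul A (tens 1 z)) = id_tens_fun (fun m => eps (m * z)) A.
Proof.
move: A.
apply: (@lin_ext _ _ _ (fun A => id_tens_fun eps (tmul A (tens 1 z))) (fun A => id_tens_fun (fun m => eps (m * z)) A)).
- by lin_tac.
- by lin_tac.
move=> i j; rewrite tmul_tens idf_tens; last exact: eps_lin.
rewrite idf_tens; last exact: eps_mulr_lin.
by rewrite mulr1.
Qed.

Lemma A_id x : tmap id et (D x) = tmul e (tens x 1).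
Proof.
have hQ : tmul e (tens x 1) = tmap id et (tmul e (tens x 1)).
  by rewrite tmap_et_tmul tmap_et_e.
rewrite hQ; apply: ND => w.
rewrite idf_tmap; [|exact: eps_mulr_lin|exact: et_lin].
rewrite (@idf_ext _ (fun m => eps (S (et w) * m))); last first.
  move=> m /=; rewrite eps_mul_et (eps_NtS _ (etNt w)).
  rewrite (NtNs_comm (etNt m) (SNt (etNt w))).
  by rewrite [in RHS]eps_mul_et.
rewrite -idf_tmul_1l -(DNsl _ (SNt (etNt w))) H.
rewrite -hQ idf_tmul_r1; last exact: eps_mulr_lin.
rewrite (@idf_ext _ (fun m => eps (m * et w))); last by move=> m; rewrite eps_mul_et.
rewrite -idf_tmul_1r (e_Nt (etNt w)) idf_tmul_r1; last exact: eps_lin.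
by rewrite H mul1r.
Qed.


Lemma es_eq v : S (et (S v)) = es v.
Proof.
rewrite /eps_t /eps_s DS; move: (D v).
apply: (@lin_ext _ _ _ (fun A => S (tmu (tmap id S (tflip (tmap S S A))))) (fun A => tmu (tmap S id A))).
- by lin_tac.
- by lin_tac.
move=> i j; rewrite tmap_tens; [|exact: Slin|exact: Slin].
rewrite tflip_tens tmap_tens; [|exact: lin_id|exact: Slin].
rewrite tmap_tens; [|exact: Slin|exact: lin_id].
by rewrite !tmu_tens Smul !SS.
Qed.

Lemma W6 x : tmap es id (D x) = tmul (tens 1 x) (unitD D).
Proof.
have R1 : tflip (tmap S S (tmul e (tens (S x) 1))) = tmul (tens 1 x) e.
  rewrite (tmap_anti Slin Smul) tmapSS_e tmap_tens; [|exact: Slin|exact: Slin].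
  by rewrite SS S1 tflip_tmul tflipK tflip_tens.
have L1 : tflip (tmap S S (tmap id et (D (S x)))) = tmap es id (D x).
  rewrite (tmap_comp Slin Slin (@lin_id R _) et_lin) DS.
  rewrite (tmap_flip (lin_comp (@lin_id R _) Slin) (lin_comp et_lin Slin)) tflipK.
  rewrite (tmap_comp (lin_comp et_lin Slin) (lin_comp (@lin_id R _) Slin) Slin Slin).
  by apply: tmap_ext => v /=; [exact: es_eq | exact: SS].
by rewrite /unitD -L1 A_id R1.
Qed.

Lemma wk : weak_kac_algebra s D S eps.
Proof.
split; first exact: HG.
split; first exact: eps_lin.
split; first exact: fid_eps.
split; first exact: H.
split; first exact: epsS.
split; first exact: eps_star.
split; first exact: W5.
exact: W6.
Qed.

End Main.

Theorem theorem2p6p1 (R : realType) (M : falgType R[i]) (s : M -> M)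
    (D : M -> 'M[R[i]]_(\dim (fullv : {vspace M}))) (S : M -> M) :
  gen_coinv_cstar_bialgebra s D S ->
  counital D S ->
  (weak_kac_algebra s D S (fun x => theta_t D (eps_t D S x)) <->
   forall x, id_tens_fun (fun y => theta_t D (eps_t D S y)) (D x) = x).
Proof.
move=> HG HC; split; first by case=> _ [_ [_ [h _]]].
move=> h; exact: (wk HG HC h).
Qed.
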